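(* Let the setting, algorithm and notation be as described in the context. Assume $\tau\in(0,(1+\sqrt5)/2)$ and that for some $\alpha\in(\tau/\min(1+\tau,1+\tau^{-1}),1]$, \[ \widehat\Sigma_f+S\succeq0,\quad H_f\succeq0,\quad \tfrac12\widehat\Sigma_g+T\succeq0,\quad M_g\succ0 . \] For $k\ge1$ let $\hat x^k:=\frac1k\sum_{i=1}^k x^{i+1}$, $\hat y^k:=\frac1k\sum_{i=1}^k y^{i+1}$, $\hat z^k:=\frac1k\sum_{i=1}^k\tilde z^{i+1}$. Then for every $k\ge1$ and every $(x,y,z)\in\mathcal X\times\mathcal Y\times\mathcal Z$, \[ \big(p(\hat x^k)+q(\hat y^k)\big)-\big(p(x)+q(y)\big)+\langle\hat x^k-x,\nabla f(x)+Az\rangle+\langle\hat y^k-y,\nabla g(y)+Bz\rangle+\langle\hat z^k-z,-(A^*x+B^*y-c)\rangle\le\frac{\phi_1(x,y,z)+\big(1-\alpha\min(\tau,\tau^{-1})\big)\sigma\|r^1\|^2+\alpha\xi_1}{2k}. \]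
   Context: Let $\mathcal X,\mathcal Y,\mathcal Z$ be finite-dimensional real Euclidean spaces with inner products $\langle\cdot,\cdot\rangle$ and induced norms $\|\cdot\|$. Let $p:\mathcal X\to(-\infty,+\infty]$ and $q:\mathcal Y\to(-\infty,+\infty]$ be closed proper convex functions, and let $f:\mathcal X\to\mathbb R$, $g:\mathcal Y\to\mathbb R$ be convex differentiable functions with Lipschitz continuous gradients. Let $A:\mathcal Z\to\mathcal X$, $B:\mathcal Z\to\mathcal Y$ be linear maps with adjoints $A^*,B^*$, and $c\in\mathcal Z$. Let $\Sigma_f,\widehat\Sigma_f$ (on $\mathcal X$) and $\Sigma_g,\widehat\Sigma_g$ (on $\mathcal Y$) be self-adjoint positive semidefinite linear operators with $\widehat\Sigma_f\succeq\Sigma_f$, $\widehat\Sigma_g\succeq\Sigma_g$, such that for all $x,x'\in\mathcal X$, $y,y'\in\mathcal Y$: $f(x')+\langle x-x',\nabla f(x')\rangle+\frac12\|x-x'\|^2_{\Sigma_f}\le f(x)\le f(x')+\langle x-x',\nabla f(x')\rangle+\frac12\|x-x'\|^2_{\widehat\Sigma_f}$ and the analogous two inequalities for $g$ with $\Sigma_g,\widehat\Sigma_g$. For a self-adjoint (possibly indefinite) operator $G$, $\|u\|_G^2:=\langle u,Gu\rangle$. Algorithm (Majorized iPADMM): let $\sigma>0$, $\tau>0$, and let $S:\mathcal X\to\mathcal X$, $T:\mathcal Y\to\mathcal Y$ be self-adjoint, possibly indefinite, linear operators with $\widehat\Sigma_f+S+\sigma AA^*\succeq0$ and $\widehat\Sigma_g+T+\sigma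 BB^*\succeq0$. Starting from $(x^0,y^0,z^0)\in\mathrm{dom}(p)\times\mathrm{dom}(q)\times\mathcal Z$, for $k=0,1,\dots$: $x^{k+1}\in\arg\min_{x}\{p(x)+\langle\nabla f(x^k),x\rangle+\frac12\|x-x^k\|^2_{\widehat\Sigma_f+S}+\langle z^k,A^*x\rangle+\frac\sigma2\|A^*x+B^*y^k-c\|^2\}$, $y^{k+1}\in\arg\min_{y}\{q(y)+\langle\nabla g(y^k),y\rangle+\frac12\|y-y^k\|^2_{\widehat\Sigma_g+T}+\langle z^k,B^*y\rangle+\frac\sigma2\|A^*x^{k+1}+B^*y-c\|^2\}$, $z^{k+1}=z^k+\tau\sigma(A^*x^{k+1}+B^*y^{k+1}-c)$ (the minimizers are assumed to exist). Notation: $r^k:=A^*x^k+B^*y^k-c$, $\tilde z^{k+1}:=z^k+\sigma r^{k+1}$; for $\alpha\in(0,1]$, $H_f:=\frac12\Sigma_f+S+\frac12(1-\alpha)\sigma AA^*$ and $M_g:=\frac12\Sigma_g+T+\min(\tau,1+\tau-\tau^2)\alpha\sigma BB^*$; $\phi_1(x,y,z):=(\tau\sigma)^{-1}\|z^1-z\|^2+\|x^1-x\|^2_{\widehat\Sigma_f+S}+\|y^1-y\|^2_{\widehat\Sigma_g+T}+\sigma\|A^*x+B^*y^1-c\|^2$; $\xi_1:=\|y^1-y^0\|^2_{\widehat\Sigma_g+T}$. *)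

(* Defs.v *)
(* finite-dimensional real Euclidean spaces are modelled as
   column vectors 'cV[R]_n with the standard inner product; linear maps as
   matrices (adjoint = transpose); extended-valued functions take values in
   \bar R (mathcomp-analysis constructive_ereal). *)
From HB Require Import structures.
From mathcomp Require Import all_boot all_order all_algebra.
From mathcomp Require Import reals constructive_ereal.
Set Implicit Arguments. Unset Strict Implicit. Unset Printing Implicit Defensive.
Import Order.TTheory GRing.Theory Num.Theory.
Local Open Scope ring_scope.

Definition dotv (R : realType) n (u v : 'cV[R]_n) : R :=
  \sum_(i < n) u i ord0 * v i ord0.
Definition enorm (R : realType) n (u : 'cV[R]_n) : R := Num.sqrt (dotv u u).
(* ||u||_G^2 := <u, G u> *)
Definition qnorm (R : realType) n (G : 'M[R]_n) (u : 'cV[R]_n) : R :=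
  dotv u (G *m u).

Definition self_adjoint (R : realType) n (G : 'M[R]_n) : Prop := G^T = G.
Definition psd (R : realType) n (G : 'M[R]_n) : Prop :=
  forall u : 'cV[R]_n, 0 <= qnorm G u.
Definition pd (R : realType) n (G : 'M[R]_n) : Prop :=
  forall u : 'cV[R]_n, u != 0 -> 0 < qnorm G u.

Definition eproper (R : realType) n (p : 'cV[R]_n -> \bar R) : Prop :=
  (forall x, p x != -oo%E) /\ (exists x, p x != +oo%E).
Definition econvex (R : realType) n (p : 'cV[R]_n -> \bar R) : Prop :=
  forall x y : 'cV[R]_n, (p x < +oo)%E -> (p y < +oo)%E ->
  forall t : R, 0 <= t <= 1 ->
  (p (t *: x + (1 - t) *: y)%R <= t%:E * p x + (1 - t)%:E * p y)%E.
(* closed = lower semicontinuous *)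
Definition elsc (R : realType) n (p : 'cV[R]_n -> \bar R) : Prop :=
  forall (x : 'cV[R]_n) (a : R), (a%:E < p x)%E ->
  exists2 d : R, 0 < d & forall u, enorm (u - x) < d -> (a%:E < p u)%E.
Definition closed_proper_convex (R : realType) n (p : 'cV[R]_n -> \bar R) :=
  [/\ eproper p, econvex p & elsc p].

Definition convex_fun (R : realType) n (f : 'cV[R]_n -> R) : Prop :=
  forall (x y : 'cV[R]_n) (t : R), 0 <= t <= 1 ->
  f (t *: x + (1 - t) *: y) <= t * f x + (1 - t) * f y.
Definition is_gradient (R : realType) n (f : 'cV[R]_n -> R)
    (gf : 'cV[R]_n -> 'cV[R]_n) : Prop :=
  forall (x : 'cV[R]_n) (e : R), 0 < e ->
  exists2 d : R, 0 < d & forall h : 'cV[R]_n, enorm h < d ->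
    `|f (x + h) - f x - dotv (gf x) h| <= e * enorm h.
Definition lipschitz_map (R : realType) n (g : 'cV[R]_n -> 'cV[R]_n) : Prop :=
  exists L : R, forall x y, enorm (g x - g y) <= L * enorm (x - y).

Definition quad_sandwich (R : realType) n (f : 'cV[R]_n -> R)
    (gf : 'cV[R]_n -> 'cV[R]_n) (Sig Sigh : 'M[R]_n) : Prop :=
  forall x x' : 'cV[R]_n,
    f x' + dotv (x - x') (gf x') + qnorm Sig (x - x') / 2 <= f x /\
    f x <= f x' + dotv (x - x') (gf x') + qnorm Sigh (x - x') / 2.

Definition xobj (R : realType) nx ny nz (p : 'cV[R]_nx -> \bar R)
    (gradf : 'cV[R]_nx -> 'cV[R]_nx) (Sfh S : 'M[R]_nx)
    (A : 'M[R]_(nx, nz)) (B : 'M[R]_(ny, nz)) (c : 'cV[R]_nz) (sigma : R)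
    (xk : 'cV[R]_nx) (yk : 'cV[R]_ny) (zk : 'cV[R]_nz) (x' : 'cV[R]_nx) : \bar R :=
  (p x' + (dotv (gradf xk) x' + qnorm (Sfh + S) (x' - xk) / 2
           + dotv zk (A^T *m x')
           + sigma / 2 * dotv (A^T *m x' + B^T *m yk - c)
                              (A^T *m x' + B^T *m yk - c))%:E)%E.

Definition yobj (R : realType) nx ny nz (q : 'cV[R]_ny -> \bar R)
    (gradg : 'cV[R]_ny -> 'cV[R]_ny) (Sgh T : 'M[R]_ny)
    (A : 'M[R]_(nx, nz)) (B : 'M[R]_(ny, nz)) (c : 'cV[R]_nz) (sigma : R)
    (xk1 : 'cV[R]_nx) (yk : 'cV[R]_ny) (zk : 'cV[R]_nz) (y' : 'cV[R]_ny) : \bar R :=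
  (q y' + (dotv (gradg yk) y' + qnorm (Sgh + T) (y' - yk) / 2
           + dotv zk (B^T *m y')
           + sigma / 2 * dotv (A^T *m xk1 + B^T *m y' - c)
                              (A^T *m xk1 + B^T *m y' - c))%:E)%E.

Definition resid (R : realType) nx ny nz (A : 'M[R]_(nx, nz)) (B : 'M[R]_(ny, nz))
    (c : 'cV[R]_nz) (x : 'cV[R]_nx) (y : 'cV[R]_ny) : 'cV[R]_nz :=
  A^T *m x + B^T *m y - c.

Definition ergavg (R : realType) n (u : nat -> 'cV[R]_n) (k : nat) : 'cV[R]_n :=
  k%:R^-1 *: \sum_(1 <= i < k.+1) u i.+1.

(* Main.v *)
Require Import Defs.
From HB Require Import structures.
From mathcomp Require Import all_boot all_order all_algebra.
From mathcomp Require Import reals constructive_ereal.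
From mathcomp Require Import ring lra.
Import Order.TTheory GRing.Theory Num.Theory.
Local Open Scope ring_scope.
Set Implicit Arguments. Unset Strict Implicit. Unset Printing Implicit Defensive.

Section Dot.
Variable R : realType.
Implicit Types (n m : nat).

Lemma dotvC n (u v : 'cV[R]_n) : dotv u v = dotv v u.
Proof. by rewrite /dotv; apply: eq_bigr => i _; rewrite mulrC. Qed.
Lemma dotvDl n (u v w : 'cV[R]_n) : dotv (u + v) w = dotv u w + dotv v w.
Proof. by rewrite /dotv -big_split; apply: eq_bigr => i _; rewrite !mxE mulrDl. Qed.
Lemma dotvDr n (u v w : 'cV[R]_n) : dotv w (u + v) = dotv w u + dotv w v.
Proof. by rewrite dotvC dotvDl !(dotvC w). Qed.
Lemma dotvZl n a (u w : 'cV[R]_n) : dotv (a *: u) w = a * dotv u w.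
Proof. by rewrite /dotv mulr_sumr; apply: eq_bigr => i _; rewrite !mxE mulrA. Qed.
Lemma dotvZr n a (u w : 'cV[R]_n) : dotv w (a *: u) = a * dotv w u.
Proof. by rewrite dotvC dotvZl dotvC. Qed.
Lemma dotvNl n (u w : 'cV[R]_n) : dotv (- u) w = - dotv u w.
Proof. by rewrite -scaleN1r dotvZl mulN1r. Qed.
Lemma dotvNr n (u w : 'cV[R]_n) : dotv w (- u) = - dotv w u.
Proof. by rewrite dotvC dotvNl dotvC. Qed.
Lemma dotvBl n (u v w : 'cV[R]_n) : dotv (u - v) w = dotv u w - dotv v w.
Proof. by rewrite dotvDl dotvNl. Qed.
Lemma dotvBr n (u v w : 'cV[R]_n) : dotv w (u - v) = dotv w u - dotv w v.
Proof. by rewrite dotvDr dotvNr. Qed.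
Lemma dotv0l n (w : 'cV[R]_n) : dotv 0 w = 0.
Proof. by rewrite -(scale0r (0 : 'cV[R]_n)) dotvZl mul0r. Qed.
Lemma dotv0r n (w : 'cV[R]_n) : dotv w 0 = 0.
Proof. by rewrite dotvC dotv0l. Qed.
Lemma dotv_ge0 n (u : 'cV[R]_n) : 0 <= dotv u u.
Proof. by rewrite /dotv; apply: sumr_ge0 => i _; rewrite -expr2 sqr_ge0. Qed.
Lemma dotv_mull m n (M : 'M[R]_(m,n)) (u : 'cV[R]_n) (v : 'cV[R]_m) :
  dotv (M *m u) v = dotv u (M^T *m v).
Proof.
rewrite /dotv.
under eq_bigr do rewrite !mxE big_distrl /=.
rewrite exchange_big /=; apply: eq_bigr => j _.
rewrite !mxE big_distrr /=; apply: eq_bigr => i _; rewrite !mxE; ring.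
Qed.
Lemma dotv_mulr m n (M : 'M[R]_(m,n)) (u : 'cV[R]_n) (v : 'cV[R]_m) :
  dotv v (M *m u) = dotv (M^T *m v) u.
Proof. by rewrite dotvC dotv_mull dotvC. Qed.
Lemma dotv_symM n (M : 'M[R]_n) (hM : M^T = M) (u v : 'cV[R]_n) :
  dotv u (M *m v) = dotv v (M *m u).
Proof. by rewrite dotv_mulr hM dotvC. Qed.
Lemma dotvMl_C n (M : 'M[R]_n) (u v : 'cV[R]_n) : dotv (M *m u) v = dotv v (M *m u).
Proof. exact: dotvC. Qed.
Definition dot2 n (u v : 'cV[R]_n) := dotv u v.
Lemma dotv_sym2 n (u v : 'cV[R]_n) : dotv u v = (dot2 u v + dot2 v u) / 2.
Proof. rewrite /dot2 (dotvC v u); lra. Qed.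
Lemma dotvM_sym2 n (M : 'M[R]_n) (hM : M^T = M) (u v : 'cV[R]_n) :
  dotv u (M *m v) = (dot2 u (M *m v) + dot2 v (M *m u)) / 2.
Proof. rewrite /dot2 (dotv_symM hM v u); lra. Qed.
End Dot.

Ltac dexp := repeat (progress (rewrite ?(mulmxDr, mulmxN, mulmxDl, mulNmx,
   dotvDl, dotvDr, dotvNl, dotvNr, dotvZl, dotvZr, trmxK, trmx_mul, mulmx0, mul0mx, dotv0l, dotv0r)
   -?scalemxAr -?scalemxAl -?mulmxA)).

Lemma quad_expand (R : realType) n nz (g0 v0: 'cV[R]_n) (F: 'M[R]_n) (hF: F^T = F) (z e: 'cV[R]_nz)
   (M : 'M[R]_(n,nz)) sigma (u d : 'cV[R]_n) t :
 let h v := dotv g0 v + qnorm F (v - v0)/2 + dotv z (M^T *m v) + sigma/2 * dotv (M^T *m v + e) (M^T *m v + e) in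
 h (u + t *: d) = h u + t * dotv (g0 + F *m (u - v0) + M *m z + sigma *: (M *m (M^T *m u + e))) d
   + t^+2 * (qnorm F d / 2 + sigma/2 * dotv (M^T *m d) (M^T *m d)).
Proof.
move=> h; rewrite /h /qnorm.
dexp.
rewrite ?(dotv_mull M) ?(dotv_mulr M).
dexp.
rewrite ?(dotvMl_C F) ?(dotvM_sym2 hF) ?dotv_sym2.
clear h. lra.
Qed.

Lemma finE (R : realType) (x : \bar R) : (x < +oo)%E -> x != -oo%E -> x = (fine x)%:E.
Proof. by case: x. Qed.

Lemma small_t (R : realType) (a Q : R) :
  (forall t, 0 < t -> t <= 1 -> 0 <= a + t * Q) -> 0 <= a.
Proof.
move=> H; rewrite leNgt; apply/negP => ha.
pose t := (- a) / (2 * (`|Q| - a)).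
have hQa : 0 < `|Q| - a by have := normr_ge0 Q; lra.
have ht0 : 0 < t by rewrite /t divr_gt0 //; lra.
have ht1 : t <= 1.
  by rewrite /t ler_pdivrMr; [have := normr_ge0 Q; lra | lra].
have := H t ht0 ht1.
have h1 : t * Q <= t * `|Q| by rewrite ler_pM2l // real_ler_norm ?num_real.
have h2 : t * `|Q| <= - a / 2.
  rewrite /t mulrAC ler_pdivrMr; last lra.
  rewrite mulrAC -mulrA ler_pM2l; last lra.
  have := normr_ge0 Q; lra.
lra.
Qed.

Lemma vi_min (R : realType) n (p : 'cV[R]_n -> \bar R) (h : 'cV[R]_n -> R)
   (u gr : 'cV[R]_n) (Qd : 'cV[R]_n -> R) :
  econvex p -> (p u < +oo)%E -> p u != -oo%E ->
  (forall x', (p u + (h u)%:E <= p x' + (h x')%:E)%E) ->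
  (forall d t, h (u + t *: d) = h u + t * dotv gr d + t^+2 * Qd d) ->
  forall x', (p x' < +oo)%E -> p x' != -oo%E ->
  0 <= fine (p x') - fine (p u) + dotv gr (x' - u).
Proof.
move=> hcvx hu1 hu2 hmin hq x' hx1 hx2.
apply: (@small_t _ _ (Qd (x' - u))) => t t0 t1.
have ht : 0 <= t <= 1 by rewrite (ltW t0) t1.
have := hcvx _ _ hx1 hu1 t ht.
have -> : t *: x' + (1 - t) *: u = u + t *: (x' - u).
  by rewrite scalerBl scale1r scalerBr addrCA.
move=> hc.
have := hmin (u + t *: (x' - u)).
move=> hm.
have := le_trans hm (leeD2r (h (u + t *: (x' - u)))%:E hc).
rewrite (finE hx1 hx2) (finE hu1 hu2) -!EFinM -!EFinD lee_fin hq.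
set P1 := fine (p x'); set P0 := fine (p u).
set D := dotv gr (x' - u); set Q := Qd (x' - u).
move=> hh.
have : 0 <= t * (P1 - P0 + D + t * Q) by rewrite expr2 in hh; lra.
by rewrite pmulr_rge0.
Qed.


Lemma pieceX (R : realType) n (Sf Sfh S : 'M[R]_n) (x x0 x1 gx0 gxx aW : 'cV[R]_n)
  (fxx fx0 fx1 Px P1 E : R) :
  Sf^T = Sf -> Sfh^T = Sfh -> S^T = S ->
  0 <= Px - P1 + dotv (gx0 + (Sfh + S) *m (x1 - x0) + aW) (x - x1) ->
  fx0 + dotv (x - x0) gx0 + qnorm Sf (x - x0) / 2 <= fxx ->
  fx1 <= fx0 + dotv (x1 - x0) gx0 + qnorm Sfh (x1 - x0) / 2 ->
  fxx + dotv (x1 - x) gxx + qnorm Sf (x1 - x) / 2 <= fx1 ->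
  0 <= qnorm Sf (x - x0 - (x1 - x)) ->
  0 <= qnorm (2^-1 *: Sf + S) (x1 - x0) + E ->
  2 * (P1 - Px + dotv (x1 - x) gxx)
  <= qnorm (Sfh + S) (x0 - x) - qnorm (Sfh + S) (x1 - x) + E + 2 * dotv aW (x - x1).
Proof.
move=> hSf hSfh hS.
rewrite /qnorm.
dexp.
rewrite ?(dotvMl_C Sf) ?(dotvMl_C Sfh) ?(dotvMl_C S).
rewrite ?(dotvM_sym2 hSf) ?(dotvM_sym2 hSfh) ?(dotvM_sym2 hS).
rewrite ?dotv_sym2.
move=> *; lra.
Qed.

Lemma pieceR (R : realType) n (Sgh T : 'M[R]_n) (y_ y0 y1 gy_ gy0 bV0 bV1 : 'cV[R]_n)
  (Q0 Q1 : R) :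
  Sgh^T = Sgh -> T^T = T ->
  0 <= Q0 - Q1 + dotv (gy0 + (Sgh + T) *m (y1 - y0) + bV1) (y0 - y1) ->
  0 <= Q1 - Q0 + dotv (gy_ + (Sgh + T) *m (y0 - y_) + bV0) (y1 - y0) ->
  - (qnorm Sgh (y1 - y0 - (y0 - y_)) / 4) <= dotv (gy0 - gy_) (y1 - y0) ->
  0 <= qnorm (2^-1 *: Sgh + T) (y1 - y0 - (y0 - y_)) ->
  0 <= qnorm (Sgh + T) (y0 - y_) - qnorm (Sgh + T) (y1 - y0) + 2 * dotv (bV0 - bV1) (y1 - y0).
Proof.
move=> hSgh hT.
rewrite /qnorm.
dexp.
rewrite ?(dotvMl_C Sgh) ?(dotvMl_C T).
rewrite ?(dotvM_sym2 hSgh) ?(dotvM_sym2 hT).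
rewrite ?dotv_sym2.
move=> *; lra.
Qed.

Lemma pieceG (R : realType) n (Sg Sgh : 'M[R]_n) (g : 'cV[R]_n -> R) (gg : 'cV[R]_n -> 'cV[R]_n)
  (a b c : 'cV[R]_n) :
  Sgh^T = Sgh -> psd Sg -> quad_sandwich g gg Sg Sgh ->
  - (qnorm Sgh (c - b - (b - a)) / 4) <= dotv (gg b - gg a) (c - b).
Proof.
move=> hSgh hSg hq.
set s := 2^-1 *: (c - b - (b - a)).
have [h1 _] := hq (b + s) a.
have [_ h2] := hq (b + s) b.
have [h3 _] := hq a b.
have [h4 _] := hq (a - s) b.
have [_ h5] := hq (a - s) a.
have [h6 _] := hq b a.
have k1 := hSg (b + s - a).
have k2 := hSg (a - b).
have k3 := hSg (a - s - b).
have k4 := hSg (b - a).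
move: h1 h2 h3 h4 h5 h6 k1 k2 k3 k4.
rewrite /s /qnorm.
set G1 := g (b + _). set G2 := g (a - _).
dexp.
rewrite ?(dotvM_sym2 hSgh).
rewrite ?dotv_sym2.
move=> *; lra.
Qed.


Lemma pieceF (R : realType) nz (ax ax0 ax1 by_ by0 by1 c z z_ : 'cV[R]_nz)
  (sigma tau alpha m gam P1 Px Q1 Qy GX GY KX KY KR Zd : R) :
  0 <= alpha -> alpha <= 1 -> 0 < sigma ->
  let r0 := ax0 + by0 - c in let r1 := ax1 + by1 - c in
  let z0 := z_ + (tau * sigma) *: r0 in let zt := z0 + sigma *: r1 in
  let b := by1 - by0 in
  2 * (P1 - Px + GX) <= KX + ((1 - alpha) * sigma / 2) * dotv (ax1 - ax0) (ax1 - ax0)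
      + 2 * dotv (z0 + sigma *: (ax1 + (by0 - c))) (ax - ax1) ->
  2 * (Q1 - Qy + GY) <= KY + gam * sigma * dotv b b + 2 * dotv zt (by_ - by1) ->
  0 <= KR + 2 * dotv (z_ + sigma *: (by0 + (ax0 - c)) - (z0 + sigma *: (by1 + (ax1 - c)))) b ->
  0 <= dotv (r1 - b + r0) (r1 - b + r0) ->
  (1 - alpha) * sigma * (dotv r0 r0 + (tau - 1) * dotv r1 r1)
    + alpha * sigma * (2 * (1 - tau) * dotv b r0 - dotv b b - (2 - tau) * dotv r1 r1)
    + gam * sigma * dotv b b
    <= (1 - alpha * m) * sigma * (dotv r0 r0 - dotv r1 r1) ->
  Zd = - 2 * dotv (z0 - z) r1 - tau * sigma * dotv r1 r1 ->
  2 * (P1 + Q1 - Px - Qy + (GX + dotv (ax1 - ax) z) + (GY + dotv (by1 - by_) z)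
       + dotv (zt - z) (- (ax + by_ - c)))
  <= Zd + KX + KY
     + sigma * (dotv (ax + by0 - c) (ax + by0 - c) - dotv (ax + by1 - c) (ax + by1 - c))
     + (1 - alpha * m) * sigma * (dotv r0 r0 - dotv r1 r1)
     + alpha * KR.
Proof.
move=> ha0 ha1 hs r0 r1 z0 zt b PX PY PR F11 F12 hZ.
have PRa := mulr_ge0 ha0 PR.
have F11a : 0 <= (1 - alpha) * sigma * dotv (r1 - b + r0) (r1 - b + r0).
  by apply: mulr_ge0 => //; apply: mulr_ge0; lra.
move: PX PY PRa F11a F12 hZ; clear PR F11.
rewrite /zt /z0 /b /r0 /r1.
dexp.
rewrite ?dotv_sym2.
move=> *; lra.
Qed.


Lemma rcheck (R : realType) (sigma tau alpha a0 a1 bb br : R) :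
  0 < sigma -> 0 < tau -> tau / Num.min (1 + tau) (1 + tau^-1) < alpha -> alpha <= 1 ->
  0 <= a1 -> 0 <= a0 + bb - 2 * br -> 0 <= a0 + tau ^+ 2 * bb + 2 * tau * br ->
  (1 - alpha) * sigma * (a0 + (tau - 1) * a1)
    + alpha * sigma * (2 * (1 - tau) * br - bb - (2 - tau) * a1)
    + (Num.min tau (1 + tau - tau ^+ 2) * alpha) * sigma * bb
    <= (1 - alpha * Num.min tau tau^-1) * sigma * (a0 - a1).
Proof.
move=> hs ht hal ha1 h1 hA hB.
have tn0 : tau != 0 by rewrite gt_eqF.
have hti : 0 < tau^-1 by rewrite invr_gt0.
have titau : tau^-1 * tau = 1 by rewrite mulVf.
have hmin0 : 0 < Num.min (1 + tau) (1 + tau^-1) by rewrite lt_min; apply/andP; split; lra.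
have ha0 : 0 < alpha by apply: lt_trans hal; rewrite divr_gt0.
have [tle1|tgt1] := lerP tau 1.
- have hti1 : 1 <= tau^-1 by rewrite invr_ge1 // unitfE.
  have e1 : Num.min (1 + tau) (1 + tau^-1) = 1 + tau by apply/min_idPl; lra.
  have e2 : Num.min tau tau^-1 = tau by apply/min_idPl; lra.
  have e3 : Num.min tau (1 + tau - tau ^+ 2) = tau.
    apply/min_idPl; have : tau ^+ 2 <= 1 by rewrite expr_le1 //; lra.
    lra.
  rewrite e2 e3; rewrite e1 in hal.
  have hal' : tau < alpha * (1 + tau) by move: hal; rewrite ltr_pdivrMr //; lra.
  have k1 : 0 <= sigma * alpha * (1 - tau) * (a0 + bb - 2 * br).
    by do ! apply: mulr_ge0; lra.
  have k2 : 0 <= sigma * (alpha * (1 + tau) - tau) * a1.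
    by do ! apply: mulr_ge0; lra.
  lra.
- have hti1 : tau^-1 < 1 by rewrite invf_lt1.
  have e1 : Num.min (1 + tau) (1 + tau^-1) = 1 + tau^-1 by apply/min_idPr; lra.
  have e2 : Num.min tau tau^-1 = tau^-1 by apply/min_idPr; lra.
  have e3 : Num.min tau (1 + tau - tau ^+ 2) = 1 + tau - tau ^+ 2.
    apply/min_idPr; have : 1 < tau ^+ 2 by rewrite expr_gt1 //; lra.
    lra.
  rewrite e2 e3; rewrite e1 in hal.
  have hal' : tau < alpha * (1 + tau^-1) by move: hal; rewrite ltr_pdivrMr //; lra.
  have k1 : 0 <= sigma * alpha * tau^-1 * (tau - 1) * (a0 + tau ^+ 2 * bb + 2 * tau * br).
    by do ! apply: mulr_ge0; lra.
  have k2 : 0 <= sigma * (alpha * (1 + tau^-1) - tau) * a1.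
    by do ! apply: mulr_ge0; lra.
  have E : (1 - alpha) * sigma * (a0 + (tau - 1) * a1)
    + alpha * sigma * (2 * (1 - tau) * br - bb - (2 - tau) * a1)
    + ((1 + tau - tau ^+ 2) * alpha) * sigma * bb
    - (1 - alpha * tau^-1) * sigma * (a0 - a1)
    = - (sigma * alpha * tau^-1 * (tau - 1) * (a0 + tau ^+ 2 * bb + 2 * tau * br))
      - sigma * (alpha * (1 + tau^-1) - tau) * a1.
    by field.
  lra.
Qed.


Lemma VIgen (R : realType) n nz (p : 'cV[R]_n -> \bar R) (g0 v0 : 'cV[R]_n) (F : 'M[R]_n)
  (z e : 'cV[R]_nz) (M : 'M[R]_(n, nz)) (sigma : R) (u : 'cV[R]_n) :
  F^T = F -> econvex p -> (p u < +oo)%E -> p u != -oo%E ->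
  (forall x', (p u + (dotv g0 u + qnorm F (u - v0)/2 + dotv z (M^T *m u)
        + sigma/2 * dotv (M^T *m u + e) (M^T *m u + e))%:E
      <= p x' + (dotv g0 x' + qnorm F (x' - v0)/2 + dotv z (M^T *m x')
        + sigma/2 * dotv (M^T *m x' + e) (M^T *m x' + e))%:E)%E) ->
  forall x', (p x' < +oo)%E -> p x' != -oo%E ->
  0 <= fine (p x') - fine (p u)
       + dotv (g0 + F *m (u - v0) + M *m z + sigma *: (M *m (M^T *m u + e))) (x' - u).
Proof.
move=> hF hc hu1 hu2 hmin.
apply: (vi_min (h := fun v => dotv g0 v + qnorm F (v - v0)/2 + dotv z (M^T *m v)
        + sigma/2 * dotv (M^T *m v + e) (M^T *m v + e))) => //.
move=> d t; exact: (quad_expand g0 v0 hF z e M sigma u d t).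
Qed.

Lemma zid (R : realType) nz (z0 z r1 : 'cV[R]_nz) (k : R) : k != 0 ->
  k^-1 * (dotv (z0 - z) (z0 - z) - dotv (z0 + k *: r1 - z) (z0 + k *: r1 - z))
  = - 2 * dotv (z0 - z) r1 - k * dotv r1 r1.
Proof.
move=> hk.
have -> : z0 + k *: r1 - z = (z0 - z) + k *: r1 by rewrite addrAC.
move: (z0 - z) => w.
dexp. rewrite (dotvC r1 w). by field.
Qed.

Lemma qnorm_addNN (R : realType) n m (M : 'M[R]_n) (N : 'M[R]_(n, m)) k (u : 'cV[R]_n) :
  qnorm (M + k *: (N *m N^T)) u = qnorm M u + k * dotv (N^T *m u) (N^T *m u).
Proof. by rewrite /qnorm mulmxDl dotvDr -scalemxAl dotvZr -mulmxA (dotv_mulr N). Qed.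

Lemma convA (R : realType) n nz (M : 'M[R]_(n, nz)) (w : 'cV[R]_nz) (u v : 'cV[R]_n) :
  dotv (M *m w) (u - v) = dotv w (M^T *m u - M^T *m v).
Proof. by rewrite dotv_mull mulmxBr. Qed.

Lemma convB (R : realType) n nz (M : 'M[R]_(n, nz)) (w : 'cV[R]_nz) (u v g : 'cV[R]_n) :
  dotv (u - v) (g + M *m w) = dotv (u - v) g + dotv (M^T *m u - M^T *m v) w.
Proof. by rewrite dotvDr (dotv_mulr M) mulmxBr dotvC. Qed.

Lemma dotv_suml (R : realType) n (I : Type) (r : seq I) (P : pred I) (F : I -> 'cV[R]_n) w :
  dotv (\sum_(i <- r | P i) F i) w = \sum_(i <- r | P i) dotv (F i) w.
Proof.
by apply: (big_morph (fun v => dotv v w)) => [u v|]; rewrite ?dotvDl ?dotv0l.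
Qed.

Lemma fin_of_lt (R : realType) (a : \bar R) (r : R) : (a + r%:E < +oo)%E -> (a < +oo)%E.
Proof. by case: a => // r0 _; rewrite ltry. Qed.

Lemma rA (R : realType) nz (r0 b : 'cV[R]_nz) (tau : R) :
  0 <= dotv r0 r0 + dotv b b - 2 * dotv b r0 /\
  0 <= dotv r0 r0 + tau ^+ 2 * dotv b b + 2 * tau * dotv b r0.
Proof.
have h1 := dotv_ge0 (b - r0). have h2 := dotv_ge0 (r0 + tau *: b).
move: h1 h2; dexp. rewrite (dotvC r0 b). move=> h1 h2; split; [lra|].
rewrite expr2; lra.
Qed.


Lemma jensen (R : realType) n (p : 'cV[R]_n -> \bar R) (u : nat -> 'cV[R]_n) :
  econvex p -> (forall j, (p (u j) < +oo)%E /\ p (u j) != -oo%E) ->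
  forall K, (1 <= K)%N ->
  (p (ergavg u K) <= (K%:R^-1 * \sum_(1 <= i < K.+1) fine (p (u i.+1)))%:E)%E.
Proof.
move=> hc hf; case=> // K _; elim: K => [|K IH].
  rewrite /ergavg !big_nat1 invr1 scale1r mul1r.
  by have [h1 h2] := hf 2%N; rewrite -(finE h1 h2).
have hK1 : (K.+1%:R : R) != 0 by rewrite pnatr_eq0.
have hK2 : (K.+2%:R : R) != 0 by rewrite pnatr_eq0.
have nK : (0:R) <= K%:R := ler0n R K.
have hK1p : (0 : R) < K.+1%:R by rewrite ltr0n.
have hK2p : (0 : R) < K.+2%:R by rewrite ltr0n.
set t : R := K.+1%:R / K.+2%:R.
have ht0 : 0 <= t by rewrite /t divr_ge0 // ltW.
have ht1 : t <= 1 by rewrite /t ler_pdivrMr // mul1r ler_nat.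
have E : ergavg u K.+2 = t *: ergavg u K.+1 + (1 - t) *: u K.+3.
  rewrite /ergavg (big_nat_recr K.+2) //= scalerDr scalerA.
  congr (_ *: _ + _ *: _); rewrite /t.
    by field; rewrite !gt_eqF //; lra.
  by field; rewrite !gt_eqF //; lra.
have [h1 h2] := hf K.+3.
have hlt : (p (ergavg u K.+1) < +oo)%E by apply: le_lt_trans IH _; rewrite ltry.
have := hc _ _ hlt h1 t; rewrite ht0 ht1 => /(_ isT).
rewrite -E => hc2.
apply: (le_trans hc2).
rewrite (finE h1 h2) -EFinM.
apply: le_trans (leeD2r _ (lee_wpmul2l _ IH)) _; first by rewrite lee_fin.
rewrite -!EFinM -EFinD lee_fin (big_nat_recr K.+2) //=.
rewrite /t le_eqVlt; apply/orP; left; apply/eqP.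
by field; rewrite !gt_eqF //; lra.
Qed.

Lemma pd_psd (R : realType) n (M : 'M[R]_n) : pd M -> psd M.
Proof.
move=> h u; have [->|hu] := eqVneq u 0; last exact: ltW (h u hu).
by rewrite /qnorm mulmx0 dotv0r.
Qed.


Unset Implicit Arguments.
Lemma avg_dot (R : realType) n (u : nat -> 'cV[R]_n) (v w : 'cV[R]_n) K : (1 <= K)%N ->
  dotv (ergavg u K - v) w = K%:R^-1 * \sum_(1 <= i < K.+1) dotv (u i.+1 - v) w.
Proof.
move=> hK; have hK0 : (K%:R : R) != 0 by rewrite pnatr_eq0 -lt0n.
rewrite /ergavg dotvBl dotvZl dotv_suml.
under [in RHS]eq_bigr do rewrite dotvBl.
rewrite sumrB sumr_const_nat subn1 /= -mulr_natr.
by field.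
Qed.

Theorem lemma5p2 (R : realType) (nx ny nz : nat)
  (p : 'cV[R]_nx -> \bar R) (q : 'cV[R]_ny -> \bar R)
  (f : 'cV[R]_nx -> R) (g : 'cV[R]_ny -> R)
  (gradf : 'cV[R]_nx -> 'cV[R]_nx) (gradg : 'cV[R]_ny -> 'cV[R]_ny)
  (A : 'M[R]_(nx, nz)) (B : 'M[R]_(ny, nz)) (c : 'cV[R]_nz)
  (Sf Sfh S : 'M[R]_nx) (Sg Sgh T : 'M[R]_ny)
  (sigma tau alpha : R)
  (xs : nat -> 'cV[R]_nx) (ys : nat -> 'cV[R]_ny) (zs : nat -> 'cV[R]_nz) :
  (* the problem data *)
  closed_proper_convex p -> closed_proper_convex q ->
  convex_fun f -> is_gradient f gradf -> lipschitz_map gradf ->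
  convex_fun g -> is_gradient g gradg -> lipschitz_map gradg ->
  self_adjoint Sf -> psd Sf -> self_adjoint Sfh -> psd Sfh -> psd (Sfh - Sf) ->
  self_adjoint Sg -> psd Sg -> self_adjoint Sgh -> psd Sgh -> psd (Sgh - Sg) ->
  quad_sandwich f gradf Sf Sfh -> quad_sandwich g gradg Sg Sgh ->
  (* algorithm parameters *)
  0 < sigma -> 0 < tau ->
  self_adjoint S -> self_adjoint T ->
  psd (Sfh + S + sigma *: (A *m A^T)) -> psd (Sgh + T + sigma *: (B *m B^T)) ->
  (* the iterates of the Majorized iPADMM *)
  (p (xs 0%N) < +oo)%E -> (q (ys 0%N) < +oo)%E ->
  (forall (k : nat) (x' : 'cV[R]_nx),
     (xobj p gradf Sfh S A B c sigma (xs k) (ys k) (zs k) (xs k.+1)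
      <= xobj p gradf Sfh S A B c sigma (xs k) (ys k) (zs k) x')%E) ->
  (forall (k : nat) (y' : 'cV[R]_ny),
     (yobj q gradg Sgh T A B c sigma (xs k.+1) (ys k) (zs k) (ys k.+1)
      <= yobj q gradg Sgh T A B c sigma (xs k.+1) (ys k) (zs k) y')%E) ->
  (forall k : nat,
     zs k.+1 = zs k + (tau * sigma) *: resid A B c (xs k.+1) (ys k.+1)) ->
  (* assumptions of the lemma *)
  tau < (1 + Num.sqrt 5) / 2 ->
  tau / Num.min (1 + tau) (1 + tau^-1) < alpha -> alpha <= 1 ->
  psd (Sfh + S) ->
  psd (2^-1 *: Sf + S + ((1 - alpha) * sigma / 2) *: (A *m A^T)) ->
  psd (2^-1 *: Sgh + T) ->
  pd (2^-1 *: Sg + T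
      + (Num.min tau (1 + tau - tau ^+ 2) * alpha * sigma) *: (B *m B^T)) ->
  forall k : nat, (1 <= k)%N ->
  forall (x : 'cV[R]_nx) (y : 'cV[R]_ny) (z : 'cV[R]_nz),
  let xh := ergavg xs k in
  let yh := ergavg ys k in
  let zh := ergavg (fun j => zs j.-1 + sigma *: resid A B c (xs j) (ys j)) k in
  let r1 := resid A B c (xs 1%N) (ys 1%N) in
  let phi1 := (tau * sigma)^-1 * dotv (zs 1%N - z) (zs 1%N - z)
              + qnorm (Sfh + S) (xs 1%N - x) + qnorm (Sgh + T) (ys 1%N - y)
              + sigma * dotv (resid A B c x (ys 1%N)) (resid A B c x (ys 1%N)) in
  let xi1 := qnorm (Sgh + T) (ys 1%N - ys 0%N) in
  ((p xh + q yh) - (p x + q y)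
   + (dotv (xh - x) (gradf x + A *m z) + dotv (yh - y) (gradg y + B *m z)
      + dotv (zh - z) (- resid A B c x y))%:E
   <= ((phi1 + (1 - alpha * Num.min tau tau^-1) * sigma * dotv r1 r1
        + alpha * xi1) / (2 * k%:R))%:E)%E.
Proof.
move=> hp hq hf hgf hlf hg hgg hlg hSf psSf hSfh psSfh psSfd hSg psSg hSgh psSgh psSgd
  sqf sqg hs ht hS hT psX psY px0 qy0 hxmin hymin hz htau hal hal1 psFx psHf psGT pdMg
  K hK x y z.
have [[hpN _] hcp _] := hp.
have [[hqN _] hcq _] := hq.
have pfin : forall j, (p (xs j) < +oo)%E /\ p (xs j) != -oo%E.
  elim=> [|j [IH1 IH2]]; split => //.
  apply: fin_of_lt; apply: le_lt_trans (hxmin j (xs j)) _.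
  by rewrite /xobj (finE IH1 IH2) -EFinD ltry.
have qfin : forall j, (q (ys j) < +oo)%E /\ q (ys j) != -oo%E.
  elim=> [|j [IH1 IH2]]; split => //.
  apply: fin_of_lt; apply: le_lt_trans (hymin j (ys j)) _.
  by rewrite /yobj (finE IH1 IH2) -EFinD ltry.
have hFx : (Sfh + S)^T = Sfh + S by rewrite raddfD /= hSfh hS.
have hFy : (Sgh + T)^T = Sgh + T by rewrite raddfD /= hSgh hT.
have VIx : forall j x', (p x' < +oo)%E -> p x' != -oo%E ->
  0 <= fine (p x') - fine (p (xs j.+1))
    + dotv (gradf (xs j) + (Sfh + S) *m (xs j.+1 - xs j) + A *m zs j
            + sigma *: (A *m (A^T *m xs j.+1 + (B^T *m ys j - c)))) (x' - xs j.+1).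
  move=> j; have [h1 h2] := pfin j.+1.
  apply: (VIgen (M := A)) => // x'.
  have e1 : forall v, A^T *m v + B^T *m ys j - c = A^T *m v + (B^T *m ys j - c).
    by move=> v; rewrite addrA.
  by have := hxmin j x'; rewrite /xobj !e1.
have VIy : forall j y', (q y' < +oo)%E -> q y' != -oo%E ->
  0 <= fine (q y') - fine (q (ys j.+1))
    + dotv (gradg (ys j) + (Sgh + T) *m (ys j.+1 - ys j) + B *m zs j
            + sigma *: (B *m (B^T *m ys j.+1 + (A^T *m xs j.+1 - c)))) (y' - ys j.+1).
  move=> j; have [h1 h2] := qfin j.+1.
  apply: (VIgen (M := B)) => // y'.
  have e1 : forall v, A^T *m xs j.+1 + B^T *m v - c = B^T *m v + (A^T *m xs j.+1 - c).
    by move=> v; rewrite addrAC addrC.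
  by have := hymin j y'; rewrite /yobj !e1.
case Epx : (p x) => [Px| |]; last by have := hpN x; rewrite Epx.
2: by cbv zeta; rewrite addye ?hqN //= addeNy addNye leNye.
case Eqy : (q y) => [Qy| |]; last by have := hqN y; rewrite Eqy.
2: by cbv zeta; rewrite addey //= addeNy addNye leNye.
have px1 : (p x < +oo)%E by rewrite Epx ltry.
have px2 : p x != -oo%E by rewrite Epx.
have qy1 : (q y < +oo)%E by rewrite Eqy ltry.
have qy2 : q y != -oo%E by rewrite Eqy.
pose m := Num.min tau tau^-1.
pose gam := Num.min tau (1 + tau - tau ^+ 2) * alpha.
pose Th := fun i => fine (p (xs i.+1)) + fine (q (ys i.+1)) - Px - Qy
   + (dotv (xs i.+1 - x) (gradf x + A *m z) + dotv (ys i.+1 - y) (gradg y + B *m z)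
      + dotv (zs i + sigma *: resid A B c (xs i.+1) (ys i.+1) - z) (- resid A B c x y)).
pose Ps := fun i => (tau * sigma)^-1 * dotv (zs i - z) (zs i - z) + qnorm (Sfh + S) (xs i - x)
   + qnorm (Sgh + T) (ys i - y) + sigma * dotv (resid A B c x (ys i)) (resid A B c x (ys i))
   + (1 - alpha * m) * sigma * dotv (resid A B c (xs i) (ys i)) (resid A B c (xs i) (ys i))
   + alpha * qnorm (Sgh + T) (ys i - ys i.-1).
have ts0 : tau * sigma != 0 by rewrite mulf_neq0 // gt_eqF.
have ha0 : 0 <= alpha.
  have hmin0 : 0 < Num.min (1 + tau) (1 + tau^-1).
    by rewrite lt_min; apply/andP; split; [lra| have := invr_gt0 tau; rewrite ht; lra].
  by apply: ltW; apply: lt_trans hal; rewrite divr_gt0.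
have step : forall k, 2 * Th k.+1 <= Ps k.+1 - Ps k.+2.
  move=> k.
  have F1 := VIx k.+1 x px1 px2.
  have F2 := VIy k.+1 y qy1 qy2.
  have F3 := VIy k.+1 (ys k.+1) (qfin k.+1).1 (qfin k.+1).2.
  have F4 := VIy k (ys k.+2) (qfin k.+2).1 (qfin k.+2).2.
  rewrite -[X in dotv X _]addrA in F1.
  rewrite -[X in dotv X _]addrA in F2.
  rewrite -[X in dotv X _]addrA in F3.
  rewrite -[X in dotv X _]addrA in F4.
  rewrite Epx /= in F1; rewrite Eqy /= in F2.
  have [F5a _] := sqf x (xs k.+1).
  have [_ F5b] := sqf (xs k.+2) (xs k.+1).
  have [F5c _] := sqf (xs k.+2) x.
  have [F6a _] := sqg y (ys k.+1).
  have [_ F6b] := sqg (ys k.+2) (ys k.+1).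
  have [F6c _] := sqg (ys k.+2) y.
  have F8 := psSf (x - xs k.+1 - (xs k.+2 - x)).
  have F8y := psSg (y - ys k.+1 - (ys k.+2 - y)).
  have F10 := psHf (xs k.+2 - xs k.+1); rewrite qnorm_addNN in F10.
  have F10' := pd_psd pdMg (ys k.+2 - ys k.+1); rewrite qnorm_addNN in F10'.
  have PX := pieceX hSf hSfh hS F1 F5a F5b F5c F8 F10.
  have PY := pieceX hSg hSgh hT F2 F6a F6b F6c F8y F10'.
  have PR := pieceR hSgh hT F3 F4 (@pieceG _ _ _ _ _ _ (ys k) (ys k.+1) (ys k.+2) hSgh psSg sqg)
     (psGT _).
  have eW : dotv (A *m zs k.+1 + sigma *: (A *m (A^T *m xs k.+2 + (B^T *m ys k.+1 - c)))) (x - xs k.+2)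
     = dotv (zs k.+1 + sigma *: (A^T *m xs k.+2 + (B^T *m ys k.+1 - c))) (A^T *m x - A^T *m xs k.+2).
    by rewrite -convA [in RHS]mulmxDr -[in RHS]scalemxAr.
  have eV : dotv (B *m zs k.+1 + sigma *: (B *m (B^T *m ys k.+2 + (A^T *m xs k.+2 - c)))) (y - ys k.+2)
     = dotv (zs k.+1 + sigma *: (B^T *m ys k.+2 + (A^T *m xs k.+2 - c))) (B^T *m y - B^T *m ys k.+2).
    by rewrite -convA [in RHS]mulmxDr -[in RHS]scalemxAr.
  have er1 : B^T *m ys k.+2 + (A^T *m xs k.+2 - c) = A^T *m xs k.+2 + B^T *m ys k.+2 - c.
    by rewrite addrCA addrA.
  have eR : dotv (B *m zs k + sigma *: (B *m (B^T *m ys k.+1 + (A^T *m xs k.+1 - c))) -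
       (B *m zs k.+1 + sigma *: (B *m (B^T *m ys k.+2 + (A^T *m xs k.+2 - c))))) (ys k.+2 - ys k.+1)
     = dotv (zs k + sigma *: (B^T *m ys k.+1 + (A^T *m xs k.+1 - c)) -
       (zs k.+1 + sigma *: (B^T *m ys k.+2 + (A^T *m xs k.+2 - c)))) (B^T *m ys k.+2 - B^T *m ys k.+1).
    by rewrite -convA [in RHS]mulmxBr ![in RHS]mulmxDr -![in RHS]scalemxAr.
  rewrite eW (mulmxBr A^T) hz /resid in PX.
  rewrite eV (mulmxBr B^T) er1 hz /resid in PY.
  rewrite eR hz /resid in PR.
  have H := @pieceF R nz (A^T *m x) (A^T *m xs k.+1) (A^T *m xs k.+2) (B^T *m y) (B^T *m ys k.+1)
    (B^T *m ys k.+2) c z (zs k) sigma tau alpha m gam _ _ _ _ _ _ _ _ _ _ ha0 hal1 hs PX PY PR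
    (dotv_ge0 _) (rcheck hs ht hal hal1 (dotv_ge0 _) (rA _ _ tau).1 (rA _ _ tau).2)
    (zid _ _ _ ts0).
  rewrite /Th /Ps /= !convB [zs k.+2]hz [zs k.+1]hz /resid.
  move: H; rewrite /=.
  lra.
have sumB : forall n, 2 * \sum_(1 <= i < n.+1) Th i <= Ps 1%N - Ps n.+1.
  elim=> [|n IH]; first by rewrite big_geq // mulr0 subrr.
  rewrite big_nat_recr //= mulrDr.
  have := step n; lra.
have hFyq : forall u, 0 <= qnorm (Sgh + T) u.
  move=> u; have h1 := psGT u; have h2 := psSgh u.
  have -> : qnorm (Sgh + T) u = qnorm (2^-1 *: Sgh + T) u + qnorm Sgh u / 2.
    by rewrite /qnorm !mulmxDl !dotvDr -scalemxAl dotvZr; lra.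
  lra.
have hm1 : 0 <= 1 - alpha * m.
  have hm : m <= 1.
    rewrite /m; have [tle|tgt] := lerP tau 1.
      by rewrite ge_min tle.
    by rewrite ge_min; apply/orP; right; rewrite invf_le1 //; lra.
  have hm0 : 0 <= m by rewrite /m le_min ltW // ltW // invr_gt0.
  have : alpha * m <= 1 * 1 by apply: ler_pM.
  lra.
have PsPos : forall n, 0 <= Ps n.
  move=> n; rewrite /Ps.
  have h1 : 0 <= (tau * sigma)^-1 * dotv (zs n - z) (zs n - z).
    by rewrite mulr_ge0 ?dotv_ge0 // invr_ge0 mulr_ge0 // ltW.
  have h2 := psFx (xs n - x). have h3 := hFyq (ys n - y).
  have h4 : 0 <= sigma * dotv (resid A B c x (ys n)) (resid A B c x (ys n)).
    by rewrite mulr_ge0 ?dotv_ge0 // ltW.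
  have h5 : 0 <= (1 - alpha * m) * sigma * dotv (resid A B c (xs n) (ys n)) (resid A B c (xs n) (ys n)).
    by rewrite !mulr_ge0 ?dotv_ge0 // ltW.
  have h6 : 0 <= alpha * qnorm (Sgh + T) (ys n - ys n.-1) by rewrite mulr_ge0.
  rewrite /qnorm in h2 h3 h6 *; lra.
cbv zeta.
have hK0 : (K%:R : R) != 0 by rewrite pnatr_eq0 -lt0n.
have hKp : (0 : R) <= K%:R^-1 by rewrite invr_ge0 ler0n.
have J1 := jensen hcp pfin hK. have J2 := jensen hcq qfin hK.
apply: le_trans (leeD2r _ (leeD2r _ (leeD J1 J2))) _.
rewrite -!EFinD lee_fin.
rewrite !avg_dot //=.
have ES : \sum_(1 <= i < K.+1) Th i = \sum_(1 <= i < K.+1) fine (p (xs i.+1))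
   + \sum_(1 <= i < K.+1) fine (q (ys i.+1)) - Px * K%:R - Qy * K%:R
   + (\sum_(1 <= i < K.+1) dotv (xs i.+1 - x) (gradf x + A *m z)
      + \sum_(1 <= i < K.+1) dotv (ys i.+1 - y) (gradg y + B *m z)
      + \sum_(1 <= i < K.+1) dotv (zs i + sigma *: resid A B c (xs i.+1) (ys i.+1) - z)
           (- resid A B c x y)).
  by rewrite /Th !big_split /= !sumr_const_nat subn1 /= !mulNrn !mulr_natr.
have key : K%:R^-1 * \sum_(1 <= i < K.+1) Th i <= K%:R^-1 * (Ps 1%N / 2).
  apply: ler_wpM2l => //; have := sumB K; have := PsPos K.+1; lra.
rewrite ES in key.
have E1 : K%:R^-1 * (Px * K%:R) = Px by field.
have E2 : K%:R^-1 * (Qy * K%:R) = Qy by field.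
set X := (_ + _ + _ * _ * _ + _ * _).
have E3 : X / (2 * K%:R) = K%:R^-1 * (X / 2) by field.
rewrite E3; move: key; rewrite /Ps /X /m /=.
lra.
Qed.
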